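(* Every topological space $X$ is $\Gamma$-embedded in $\mathcal{K}(X)$, the hyperspace of all nonempty compact subsets of $X$ with the Vietoris topology; namely via the embedding $c\colon X\to\mathcal K(X)$, $x\mapsto\{x\}$, and the semigroup homomorphism $\sigma\colon\Gamma(X)\to\Gamma(\mathcal K(X))$ given by $\sigma(1_\emptyset)=1_\emptyset$ and, for $f$ with nonempty domain, $\sigma(f)\colon \mathrm{dom}(f)^+\to\mathrm{im}(f)^+$, $A\mapsto f(A)$.
   Context: The Vietoris topology on $\mathcal K(X)$ has subbasis the sets $V^-=\{A\in\mathcal K(X): A\cap V\ne\emptyset\}$ and $V^+=\{A\in\mathcal K(X): A\subset V\}$ for $V\subset X$ nonempty open. For a topological space $X$, $\Gamma(X)$ is the inverse monoid of homeomorphisms between open subsets of $X$ (including the empty map $1_\emptyset$), with product $\psi\circ\phi\colon \phi^{-1}(\mathrm{dom}(\psi)\cap\mathrm{im}(\phi))\to\psi(\mathrm{dom}(\psi)\cap\mathrm{im}(\phi))$. Let $\Gamma(X)*X=\{(f,x)\in\Gamma(X)\times X: x\in\mathrm{dom}(f)\}$. $X$ is $\Gamma$-embedded in a space $Z$ if there exist a semigroup homomorphism $\sigma\colon\Gamma(X)\to\Gamma(Z)$ and a topological embedding $c\colon X\to Z$ such that for every $(f,x)\in\Gamma(X)*X$ one has $c(x)\in\mathrm{dom}(\sigma(f))$ and $\sigma(f)(c(x))=c(f(x))$. *)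

(* Defs.v *)
From HB Require Import structures.
From mathcomp Require Import all_boot all_classical.
From mathcomp Require Import topology.
From Stdlib Require List.

Set Implicit Arguments.
Unset Strict Implicit.
Unset Printing Implicit Defensive.

Local Open Scope classical_set_scope.

(* A topology on a type T is given here by its predicate of open sets
   [op : set T -> Prop]; for a topologicalType we use [open]. *)

(* Partial maps T -> T (maps between subsets): f x = None means x is not in
   dom(f).  Leibniz equality of such maps is equality of partial maps. *)
Definition pdom (T : Type) (f : T -> option T) : set T :=
  [set x | f x <> None].
Definition pimg (T : Type) (f : T -> option T) : set T :=
  [set y | exists x, f x = Some y].

Definition pcomp (T : Type) (psi phi : T -> option T) : T -> option T :=
  fun x => match phi x with Some y => psi y | None => None end.

Definition partial_homeo (T : Type) (op : set T -> Prop) (f : T -> option T)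
  : Prop :=
  [/\ op (pdom f),
      op (pimg f),
      (forall x1 x2 y, f x1 = Some y -> f x2 = Some y -> x1 = x2),
      (* continuity of f : dom f -> im f (subspace topologies of open sets) *)
      (forall V, op V -> op [set x | exists y, f x = Some y /\ V y]) &
      (* continuity of the inverse, i.e. f is open on dom f *)
      (forall U, op U -> op [set y | exists x, f x = Some y /\ U x])].

Definition Gamma (T : Type) (op : set T -> Prop) : set (T -> option T) :=
  [set f | partial_homeo op f].

Definition top_embedding (X Z : Type) (opX : set X -> Prop)
  (opZ : set Z -> Prop) (c : X -> Z) : Prop :=
  [/\ injective c,
      (forall V, opZ V -> opX (c @^-1` V)) &
      (forall U, opX U -> exists V, opZ V /\ c @^-1` V = U)].

Definition gamma_embedded_via (X Z : Type) (opX : set X -> Prop)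
  (opZ : set Z -> Prop) (sigma : (X -> option X) -> (Z -> option Z))
  (c : X -> Z) : Prop :=
  [/\
      (forall f, Gamma opX f -> Gamma opZ (sigma f)),
      (forall f g, Gamma opX f -> Gamma opX g ->
         sigma (pcomp g f) = pcomp (sigma g) (sigma f)),
      top_embedding opX opZ c &
      (forall f x y, Gamma opX f -> f x = Some y ->
         sigma f (c x) = Some (c y))].

Definition gamma_embedded (X Z : Type) (opX : set X -> Prop)
  (opZ : set Z -> Prop) : Prop :=
  exists sigma c, gamma_embedded_via opX opZ sigma c.

Definition hyperspace (X : topologicalType) : Type :=
  {A : set X | compact A /\ A !=set0}.

Definition vietoris_minus (X : topologicalType) (V : set X)
  : set (hyperspace X) :=
  [set A | exists2 x, proj1_sig A x & V x].
Definition vietoris_plus (X : topologicalType) (V : set X)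
  : set (hyperspace X) :=
  [set A | proj1_sig A `<=` V].

Definition vietoris_subbasic (X : topologicalType) (W : set (hyperspace X))
  : Prop :=
  exists V : set X, [/\ open V, V !=set0 &
    (W = vietoris_minus V \/ W = vietoris_plus V)].

(* Open sets of the topology generated by this subbasis: unions of finite
   intersections of subbasic sets. *)
Definition vietoris_open (X : topologicalType) (U : set (hyperspace X))
  : Prop :=
  forall A, U A -> exists s : seq (set (hyperspace X)),
    [/\ (forall W, List.In W s -> vietoris_subbasic W),
        (forall W, List.In W s -> W A) &
        (forall B, (forall W, List.In W s -> W B) -> U B)].

Definition singleton_map (X : topologicalType) (x : X) : hyperspace X :=
  exist _ [set x] (conj (@compact_set1 X x) (ex_intro _ x (erefl : [set x] x))).

(* For f in Gamma(X) the image
   of a nonempty compact A contained in dom f is nonempty compact, so the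
   guard below is then equivalent to A `<=` dom f; for f = 1_emptyset the
   result is the empty map. *)
Definition pimage (X : Type) (f : X -> option X) (A : set X) : set X :=
  [set y | exists2 x, A x & f x = Some y].

Definition sigmaK (X : topologicalType) (f : X -> option X)
  (A : hyperspace X) : option (hyperspace X) :=
  match pselect ((proj1_sig A `<=` pdom f) /\
                 (compact (pimage f (proj1_sig A)) /\
                  pimage f (proj1_sig A) !=set0)) with
  | left H => Some (exist _ (pimage f (proj1_sig A)) (proj2 H))
  | right _ => None
  end.

(* Main.v *)
Require Import Defs.
From mathcomp Require Import all_boot all_classical.
From mathcomp Require Import topology.
From Stdlib Require List.

Set Implicit Arguments.
Unset Strict Implicit.
Unset Printing Implicit Defensive.
Local Open Scope classical_set_scope.

Section S.
Variable X : topologicalType.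
Notation K := (hyperspace X).

Lemma hs_eq (A B : K) : proj1_sig A = proj1_sig B -> A = B.
Proof.
case: A => a pa; case: B => b pb /= E; subst b; congr exist; exact: Prop_irrelevance.
Qed.

Lemma sigmaK_some (h : X -> option X) (A B : K) :
  proj1_sig A `<=` pdom h -> pimage h (proj1_sig A) = proj1_sig B ->
  sigmaK h A = Some B.
Proof.
move=> sub E; rewrite /sigmaK; case: pselect => [H|H].
  by congr Some; apply: hs_eq => /=.
exfalso; apply: H; split => //; rewrite E; exact: (proj2_sig B).
Qed.

Lemma sigmaK_inv (h : X -> option X) (A B : K) :
  sigmaK h A = Some B ->
  proj1_sig A `<=` pdom h /\ proj1_sig B = pimage h (proj1_sig A).
Proof.
rewrite /sigmaK; case: pselect => [H|H] // [<-]; split => //; exact: (proj1 H).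
Qed.

Lemma image_compact (f : X -> option X) (A : set X) :
  (forall V, open V -> open [set x | exists y, f x = Some y /\ V y]) ->
  compact A -> A `<=` pdom f -> compact (pimage f A).
Proof.
move=> fc Ac Ad F PF FA.
pose B := fun T : set X => [set x | A x /\ exists y, f x = Some y /\ T y].
have GF : Filter (filter_from F B).
  apply: filter_from_filter; first by exists setT; exact: filterT.
  move=> T1 T2 F1 F2; exists (T1 `&` T2); first exact: filterI.
  by move=> x [Ax [y [E [T1y T2y]]]]; split; split => //; exists y.
have PG : ProperFilter (filter_from F B).
  apply: filter_from_proper => T FT.
  have [y [Ty [x Ax E]]] := filter_ex (filterI FT FA).
  by exists x; split => //; exists y.
have GA : filter_from F B A by exists (pimage f A) => // x [].
have [x [Ax clx]] := Ac _ PG GA.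
have := Ad x Ax; case E: (f x) => [y|] // _.
exists y; split; first by exists x.
move=> T N FT; rewrite nbhsE => -[O [oO Oy] ON].
have GB : filter_from F B (B T) by exists T.
have NO : nbhs x [set x | exists y, f x = Some y /\ O y].
  by apply: open_nbhs_nbhs; split; [exact: fc | exists y].
have [x' [[Ax' [y1 [E1 Ty1]]] [y2 [E2 Oy2]]]] := clx _ _ GB NO.
move: E2; rewrite E1 => -[?]; subst y2; exists y1; split => //; exact: ON.
Qed.

Lemma ext_prop (T : Type) (op : set T -> Prop) (P Q : set T) :
  (forall x, P x <-> Q x) -> op P -> op Q.
Proof.
by move=> H; have -> : P = Q by apply/funext => x; apply/propext; exact: H.
Qed.

Definition inv_rel (f g : X -> option X) :=
  forall x y, f x = Some y <-> g y = Some x.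

Lemma inv_rel_sym f g : inv_rel f g -> inv_rel g f.
Proof. by move=> R x y; split => /R. Qed.

Lemma sigmaK_swap f g (A B : K) :
  inv_rel f g -> sigmaK f A = Some B -> sigmaK g B = Some A.
Proof.
move=> R /sigmaK_inv [sub E]; apply: sigmaK_some.
  by move=> y; rewrite E => -[x Ax Fx]; rewrite /pdom /= ((R x y).1 Fx).
apply/funext => x; apply/propext; split.
  move=> [y By Gy]; move: By; rewrite E => -[x' Ax' Fx'].
  by move: ((R x' y).1 Fx'); rewrite Gy => -[->].
move=> Ax; have := sub x Ax; case Fx: (f x) => [y|] // _.
by exists y; [rewrite E; exists x | apply/R].
Qed.

Definition finv (f : X -> option X) : X -> option X := fun y =>
  match pselect (exists x, f x = Some y) with
  | left H => Some (projT1 (cid H))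
  | right _ => None
  end.

Lemma finv_rel f : (forall x1 x2 y, f x1 = Some y -> f x2 = Some y -> x1 = x2) ->
  inv_rel f (finv f).
Proof.
move=> inj x y; rewrite /finv; case: pselect => [H|H]; split.
- by move=> Fx; congr Some; case: (cid H) => x' /= Fx'; exact: inj Fx' Fx.
- by case=> <-; exact: (projT2 (cid H)).
- by move=> Fx; exfalso; apply: H; exists x.
- by [].
Qed.

Lemma Gamma_inv f g : Gamma open f -> inv_rel f g -> Gamma open g.
Proof.
move=> [od oi inj c4 c5] R; split.
- apply: ext_prop oi => y; split.
    by move=> [x /R E]; rewrite /pdom /= E.
  by case E: (g y) => [x|] // _; exists x; apply/R.
- apply: ext_prop od => x; split.
    by case E: (f x) => [y|] // _; exists y; apply/R.
  by move=> [y /R E]; rewrite /pdom /= E.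
- move=> y1 y2 x /R E1 /R; rewrite E1 => -[] //.
- move=> V oV; apply: ext_prop (c5 V oV) => y; split.
    by move=> [x [/R Fx Vx]]; exists x.
  by move=> [x [/R Fx Vx]]; exists x.
- move=> U oU; apply: ext_prop (c4 U oU) => x; split.
    by move=> [y [/R Fx Vx]]; exists y.
  by move=> [y [/R Fx Vx]]; exists y.
Qed.

Lemma sigmaK_dom f (A : K) : Gamma open f -> proj1_sig A `<=` pdom f ->
  exists B, sigmaK f A = Some B.
Proof.
move=> [_ _ _ c4 _] sub.
have cA : compact (pimage f (proj1_sig A)).
  exact: image_compact c4 (proj1 (proj2_sig A)) sub.
have nA : pimage f (proj1_sig A) !=set0.
  have [a Aa] := proj2 (proj2_sig A).
  have := sub a Aa; case Fa: (f a) => [y|] // _; exists y; exists a => //.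
exists (exist _ (pimage f (proj1_sig A)) (conj cA nA)); exact: sigmaK_some.
Qed.

Lemma sigmaK_none h (A : K) : ~ (proj1_sig A `<=` pdom h) -> sigmaK h A = None.
Proof.
move=> H; case E: (sigmaK h A) => [B|] //; exfalso; apply: H.
exact: (proj1 (sigmaK_inv E)).
Qed.

Lemma vopen_plus (V : set X) : open V ->
  vietoris_open [set A : K | proj1_sig A `<=` V].
Proof.
move=> oV A AV; exists [:: vietoris_plus V]; split.
- move=> W [<-|[]]; exists V; split => //; last by right.
  by have [x Ax] := proj2 (proj2_sig A); exists x; exact: AV x Ax.
- by move=> W [<-|[]]; exact: AV.
- by move=> B HB; exact: (HB _ (or_introl erefl)).
Qed.

Lemma pull_list (f : X -> option X) (A B : K) (s : seq (set K)) :
  Gamma open f -> sigmaK f A = Some B ->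
  (forall W, List.In W s -> vietoris_subbasic W) ->
  (forall W, List.In W s -> W B) ->
  exists s' : seq (set K),
    [/\ (forall W, List.In W s' -> vietoris_subbasic W),
        (forall W, List.In W s' -> W A) &
        (forall A' B', sigmaK f A' = Some B' ->
           (forall W, List.In W s' -> W A') -> forall W, List.In W s -> W B')].
Proof.
move=> [od oi inj c4 c5] sAB; have [subA EB] := sigmaK_inv sAB.
elim: s => [|W s IH] sub hold.
  by exists [::]; split => // ? ? ? ? ? [].
have [s' [s'1 s'2 s'3]] := IH (fun W' h => sub W' (or_intror h))
                               (fun W' h => hold W' (or_intror h)).
have [V [oV [v Vv] EW]] := sub W (or_introl erefl).
have WB := hold W (or_introl erefl).
pose V' := [set x | exists y, f x = Some y /\ V y].
have oV' : open V' := c4 V oV.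
case: EW => EW; subst W.
  case: WB => y By Vy; move: By; rewrite EB => -[x Ax Fx].
  exists (vietoris_minus V' :: s'); split.
  - move=> W [<-|h]; last exact: s'1.
    by exists V'; split => //; [exists x; exists y | left].
  - by move=> W [<-|h]; [exists x => //; exists y | exact: s'2].
  - move=> A' B' sAB' H W [<-|h]; last first.
      by apply: (s'3 _ _ sAB' (fun W h => H W (or_intror h))).
    have [_ EB'] := sigmaK_inv sAB'.
    have [x' Ax' [y' [Fx' Vy']]] := H _ (or_introl erefl).
    by exists y' => //; rewrite EB'; exists x'.
have [a Aa] := proj2 (proj2_sig A).
exists (vietoris_plus V' :: s'); split.
- move=> W [<-|h]; last exact: s'1.
  exists V'; split => //; last by right.
  have := subA a Aa; case Fa: (f a) => [y|] // _.
  by exists a, y; split => //; apply: WB; rewrite EB; exists a.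
- move=> W [<-|h]; last exact: s'2.
  move=> x Ax; have := subA x Ax; case Fx: (f x) => [y|] // _.
  by exists y; split => //; apply: WB; rewrite EB; exists x.
- move=> A' B' sAB' H W [<-|h]; last first.
    by apply: (s'3 _ _ sAB' (fun W h => H W (or_intror h))).
  have [_ EB'] := sigmaK_inv sAB'.
  move=> y; rewrite EB' => -[x Ax' Fx].
  have [y' [Fx' Vy']] := H _ (or_introl erefl) x Ax'.
  by move: Fx'; rewrite Fx => -[->].
Qed.

Lemma cont f (W : set K) : Gamma open f -> vietoris_open W ->
  vietoris_open [set A | exists B, sigmaK f A = Some B /\ W B].
Proof.
move=> Gf oW A [B [sAB WB]].
have [s [s1 s2 s3]] := oW B WB.
have [s' [t1 t2 t3]] := pull_list Gf sAB s1 s2.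
have [od _ _ _ _] := Gf; have [subA _] := sigmaK_inv sAB.
exists (vietoris_plus (pdom f) :: s'); split.
- move=> W' [<-|h]; last exact: t1.
  exists (pdom f); split => //; last by right.
  by have [a Aa] := proj2 (proj2_sig A); exists a; exact: subA.
- by move=> W' [<-|h]; [exact: subA | exact: t2].
- move=> A' H; have sub' := H _ (or_introl erefl).
  have [B' sAB'] := sigmaK_dom Gf sub'.
  exists B'; split => //; apply: s3; apply: (t3 _ _ sAB').
  by move=> W' h; apply: H; right.
Qed.

Lemma list_open (s : seq (set K)) :
  (forall W, List.In W s -> vietoris_subbasic W) ->
  open [set z | forall W, List.In W s -> W (singleton_map z)].
Proof.
elim: s => [|W s IH] sub.
  by apply: ext_prop (@openT X) => x; split => // _ ? [].
have [V [oV _ EW]] := sub W (or_introl erefl).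
have oR := IH (fun W' h => sub W' (or_intror h)).
have HW : forall z, W (singleton_map z) <-> V z.
  move=> z; case: EW => ->; split.
  - by case=> x /= -> .
  - by move=> Vz; exists z.
  - by move=> H; apply: H.
  - by move=> Vz x /= ->.
apply: ext_prop (openI oV oR) => z; split.
  by move=> [Vz Rz] W' [<-|h]; [exact/HW | exact: Rz].
by move=> H; split; [apply/HW; apply: H; left | move=> W' h; apply: H; right].
Qed.

End S.

Theorem proposition2p6 (X : topologicalType) :
  gamma_embedded_via (@open X) (@vietoris_open X) (@sigmaK X) (@singleton_map X).
Proof.
split.
- move=> f Gf; have R := finv_rel (let: And5 _ _ i _ _ := Gf in i).
  have Gg := Gamma_inv Gf R.
  have [od oi inj c4 c5] := Gf.
  have domE : forall h : X -> option X, Gamma (@open X) h -> vietoris_open (pdom (sigmaK h)).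
    move=> h Gh; have [odh _ _ _ _] := Gh.
    apply: ext_prop (vopen_plus odh) => A; split.
      by move=> sub; have [B E] := sigmaK_dom Gh sub; rewrite /pdom /= E.
    by case E: (sigmaK h A) => [B|] // _; exact: (proj1 (sigmaK_inv E)).
  split.
  + exact: domE.
  + apply: ext_prop (domE _ Gg) => B; split.
      by case E: (sigmaK (finv f) B) => [A|] // _; exists A;
        apply: (sigmaK_swap (inv_rel_sym R)).
    by move=> [A /(sigmaK_swap R) E]; rewrite /pdom /= E.
  + move=> A1 A2 B /(sigmaK_swap R) E1 /(sigmaK_swap R); rewrite E1 => -[] //.
  + by move=> W oW; exact: cont.
  + move=> U oU; apply: ext_prop (cont Gg oU) => B; split.
      by move=> [A [/(sigmaK_swap (inv_rel_sym R)) E UA]]; exists A.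
    by move=> [A [/(sigmaK_swap R) E UA]]; exists A.
- move=> f g Gf Gg; apply/funext => A.
  case: (pselect (proj1_sig A `<=` pdom (Defs.pcomp g f))) => [H|H]; last first.
    rewrite (sigmaK_none H) /Defs.pcomp; case E: (sigmaK f A) => [B|] //.
    have [subA EB] := sigmaK_inv E.
    case E2: (sigmaK g B) => [C|] //; have [subB _] := sigmaK_inv E2.
    exfalso; apply: H => x Ax; have := subA x Ax.
    rewrite /pdom /=; case Fx: (f x) => [y|] // _.
    by rewrite /Defs.pcomp Fx; apply: subB; rewrite EB; exists x.
  have subf : proj1_sig A `<=` pdom f.
    by move=> x0 /H; rewrite /pdom /Defs.pcomp /=; case: (f x0).
  have [B sAB] := sigmaK_dom Gf subf; have [_ EB] := sigmaK_inv sAB.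
  have subg : proj1_sig B `<=` pdom g.
    by move=> y; rewrite EB => -[x /H Ax Fx]; move: Ax; rewrite /pdom /Defs.pcomp /= Fx.
  have [C sBC] := sigmaK_dom Gg subg; have [_ EC] := sigmaK_inv sBC.
  have -> : Defs.pcomp (sigmaK g) (sigmaK f) A = Some C by rewrite /Defs.pcomp sAB.
  apply: sigmaK_some => //; rewrite EC EB.
  apply/funext => z; apply/propext; split.
    move=> [x Ax]; rewrite /Defs.pcomp; case Fx: (f x) => [y|] // Gy.
    by exists y => //; exists x.
  by move=> [y [x Ax Fx] Gy]; exists x => //; rewrite /Defs.pcomp Fx.
- split.
  + move=> x y E; have := congr1 (@proj1_sig _ _) E => /= E'.
    by have : [set x] x by []; rewrite E'.
  + move=> V oV; rewrite openE => x Vx.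
    have [s [s1 s2 s3]] := oV _ Vx.
    rewrite /interior nbhsE; exists [set z | forall W, List.In W s -> W (singleton_map z)].
      by split; [exact: list_open | exact: s2].
    by move=> z Hz; exact: s3.
  + move=> U oU; exists [set A : hyperspace X | proj1_sig A `<=` U]; split.
      exact: vopen_plus.
    apply/funext => z; apply/propext; split.
      by move=> H; apply: H.
    by move=> Uz w /= ->.
- move=> f x y Gf Fx; apply: sigmaK_some.
    by move=> z /= ->; rewrite /pdom /= Fx.
  apply/funext => z; apply/propext; split.
    by move=> [x' /= -> ]; rewrite Fx => -[->].
  by move=> /= ->; exists x.
Qed.
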